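(* For every $n\ge1$: (i) $\displaystyle\sum_{[\pi]\in\mathfrak{C}_{2n}^o}x^{\operatorname{drop}_{oo}([\pi])}y^{\operatorname{drop}_{eo}([\pi])}=\sum_{[\pi']\in\mathfrak{C}_{2n-1}^o}x^{\operatorname{drop}_{oo}([\pi'])}y^{\operatorname{drop}_{eo}([\pi'])}\Big[\operatorname{drop}_{oo}([\pi'])x^{-1}y+\operatorname{drop}_{eo}([\pi'])+\big(n-\operatorname{drop}_{oo}([\pi'])-\operatorname{drop}_{eo}([\pi'])\big)y\Big];$ (ii) $\displaystyle\sum_{[\pi]\in\mathfrak{C}_{2n+1}^o}x^{\operatorname{drop}_{oo}([\pi])}y^{\operatorname{drop}_{eo}([\pi])}=\sum_{[\pi']\in\mathfrak{C}_{2n}^o}x^{\operatorname{drop}_{oo}([\pi'])}y^{\operatorname{drop}_{eo}([\pi'])}\Big[\operatorname{drop}_{oo}([\pi'])+\operatorname{drop}_{eo}([\pi'])xy^{-1}+\big(n-\operatorname{drop}_{oo}([\pi'])-\operatorname{drop}_{eo}([\pi'])\big)x\Big].$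
   Context: $x,y$ are formal variables. For $n\ge1$, a cycle on $[n]=\{1,\dots,n\}$ is an equivalence class $[\pi]$ of permutations $\pi=\pi_1\cdots\pi_n$ of $[n]$ (in one-line notation) under cyclic rotation of the entries; the set of cycles on $[n]$ is $\mathfrak{C}_n$. Each cycle is represented by the permutation $\pi$ with $\pi_1=1$, and indices are read modulo $n$. A drop of $[\pi]$ is a consecutive pair $(\pi_i,\pi_{i+1})$, $1\le i\le n$, with $\pi_i>\pi_{i+1}$. By convention, the unique cycle $[(1)]\in\mathfrak{C}_1$ has exactly one drop $(\star,1)$, where $\star$ is considered neither even nor odd. A drop $(a,b)$ is odd-odd if $a,b$ are both odd, and even-odd if $a$ is even and $b$ is odd; $\operatorname{drop}_{oo}([\pi])$ and $\operatorname{drop}_{eo}([\pi])$ are the numbers of odd-odd and even-odd drops of $[\pi]$. $\mathfrak{C}_n^o$ is the set of cycles $[\pi]\in\mathfrak{C}_n$ such that for every drop $(\pi_i,\pi_{i+1})$, the entry $\pi_{i+1}$ is odd. *)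

(* Defs.v *)
From HB Require Import structures.
From mathcomp Require Import all_boot all_order all_algebra all_fingroup.
Set Implicit Arguments. Unset Strict Implicit. Unset Printing Implicit Defensive.
Import Order.TTheory GRing.Theory Num.Theory.

(* A cycle [pi] on [m] = {1,..,m} is represented by the unique permutation
   pi with pi_1 = 1.  We encode pi as s : 'S_m via pi_(i+1) = (s i) + 1
   (0-based positions and values in 'I_m). *)

Definition cyc_pair m (s : 'S_m) (i : 'I_m) : nat * nat :=
  ((val (s i)).+1, (val (s (ordS i))).+1).

Definition drops m (s : 'S_m) : seq (nat * nat) :=
  [seq cyc_pair s i | i <- enum 'I_m & (cyc_pair s i).2 < (cyc_pair s i).1].

Definition drop_oo m (s : 'S_m) : nat :=
  count (fun p => odd p.1 && odd p.2) (drops s).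

Definition drop_eo m (s : 'S_m) : nat :=
  count (fun p => ~~ odd p.1 && odd p.2) (drops s).

Definition cycle_rep m (s : 'S_m) : bool :=
  [forall i : 'I_m, (val i == 0) ==> (val (s i) == 0)].

Definition in_Co m (s : 'S_m) : bool := all (fun p => odd p.2) (drops s).

Definition Csum (R : comNzRingType) m (F : nat -> nat -> R) : R :=
  \sum_(s : 'S_m | cycle_rep s && in_Co s) F (drop_oo s) (drop_eo s).

(* Main.v *)
Require Import Defs.
From HB Require Import structures.
From mathcomp Require Import all_boot all_order all_algebra all_fingroup.
From mathcomp Require Import zify ring.
Import GRing.Theory.
Set Implicit Arguments. Unset Strict Implicit. Unset Printing Implicit Defensive.

Definition cp (l : seq nat) := zip l (rot 1 l).
Definition isd (p : nat * nat) := p.2 < p.1.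
Definition ins (l : seq nat) e k := take k.+1 l ++ e :: drop k.+1 l.

Lemma take_zip' (S T : Type) (s : seq S) (t : seq T) n :
  take n (zip s t) = zip (take n s) (take n t).
Proof. by elim: s t n => [|a s IH] [|b t] [|n] //=; rewrite IH. Qed.

Lemma drop_zip' (S T : Type) (s : seq S) (t : seq T) n :
  drop n (zip s t) = zip (drop n s) (drop n t).
Proof. by elim: s t n => [|a s IH] [|b t] [|n] //=; try case: (drop _ _). Qed.

Lemma zip_rot (S T : Type) (s : seq S) (t : seq T) n : size s = size t ->
  zip (rot n s) (rot n t) = rot n (zip s t).
Proof.
move=> Hs; rewrite /rot zip_cat ?take_zip' ?drop_zip' //.
by rewrite !size_drop Hs.
Qed.

Lemma cp_rot n l : perm_eq (cp (rot n l)) (cp l).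
Proof.
by rewrite /cp rot_rot zip_rot ?size_rot // perm_rot.
Qed.

Lemma cp_cons e b r0 :
  cp (e :: b :: r0) = (e, b) :: rcons (zip (belast b r0) r0) (last b r0, e)
  /\ cp (b :: r0) = rcons (zip (belast b r0) r0) (last b r0, b).
Proof.
rewrite /cp !rot1_cons /=.
by rewrite (lastI b r0) !zip_rcons ?size_belast.
Qed.

Lemma count_ins l e k (Q : pred (nat * nat)) : k < size l ->
  let r := rot k.+1 l in
  count Q (cp (ins l e k)) + Q (last 0 r, head 0 r)
  = count Q (cp l) + Q (e, head 0 r) + Q (last 0 r, e).
Proof.
move=> Hk r.
have E : rot k.+1 (ins l e k) = e :: r.
  have Hu : size (take k.+1 l) = k.+1 by rewrite size_takel.
  by rewrite /ins -{1}Hu rot_size_cat /r /rot.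
rewrite -(seq.permP (cp_rot k.+1 l)) -(seq.permP (cp_rot k.+1 (ins l e k))) E -/r.
have : size r > 0 by rewrite size_rot; case: (size l) Hk.
clearbody r; case: r {E} => [|b r0] // _.
have [E1 E2] := cp_cons e b r0.
rewrite E1 E2 /= -!cats1 !count_cat /=; lia.
Qed.
Definition Qbad (p : nat * nat) := isd p && ~~ odd p.2.
Definition Co l := count Qbad (cp l) == 0.
Definition U m := [seq l <- permutations (iota 1 m) | head 0 l == 1].
Definition bk l k := (nth (0,0) (cp l) k).2.
Definition Ins m := [seq ins p.1 m.+1 p.2 | p <- [seq p <- [seq (l,k) | l <- [seq l <- U m | Co l], k <- iota 0 m] | odd (bk p.1 p.2)]].

Lemma size_cp l : size (cp l) = size l.
Proof. by rewrite /cp size1_zip // size_rot. Qed.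

Lemma pair_nth l k : k < size l ->
  nth (0,0) (cp l) k = (last 0 (rot k.+1 l), head 0 (rot k.+1 l)).
Proof.
move=> Hk; rewrite /cp nth_zip ?size_rot //; congr pair.
  by rewrite /rot last_cat (take_nth 0 Hk) last_rcons.
case: l Hk => [|x l0] //= Hk.
rewrite rot1_cons nth_rcons /rot /=.
case: ltnP => H.
  by rewrite (drop_nth 0 H).
have -> : k = size l0 by lia.
by rewrite eqxx drop_size.
Qed.

Lemma memU m l : (l \in U m) = (perm_eq l (iota 1 m) && (head 0 l == 1)).
Proof. by rewrite mem_filter mem_permutations andbC. Qed.

Lemma U_bound m l z : l \in U m -> z \in l -> 0 < z <= m.
Proof.
rewrite memU => /andP [/perm_mem H _]; rewrite H mem_iota; lia.
Qed.

Lemma U_size m l : l \in U m -> size l = m.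
Proof. by rewrite memU => /andP [/perm_size -> _]; rewrite size_iota. Qed.

Lemma head_mem0 (r : seq nat) : head 0 r \in 0 :: r.
Proof. by case: r => [|a r] //=; rewrite !inE eqxx orbT. Qed.

Lemma bound0 m l z : l \in U m -> z \in 0 :: l -> z < m.+1.
Proof.
move=> Hl; rewrite inE => /orP [/eqP -> //| Hz].
by have := U_bound Hl Hz; lia.
Qed.

Lemma ins_facts m l k (Q : pred (nat * nat)) : l \in U m -> k < m ->
  let p := nth (0,0) (cp l) k in
  [/\ count Q (cp (ins l m.+1 k)) + Q p = count Q (cp l) + Q (m.+1, p.2) + Q (p.1, m.+1),
      p.1 < m.+1, p.2 < m.+1 & p \in cp l].
Proof.
move=> Hl Hk p.
have Hs := U_size Hl.
have Hk' : k < size l by rewrite Hs.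
have Hp := pair_nth Hk'.
have Hm z : (z \in 0 :: rot k.+1 l) = (z \in 0 :: l) by rewrite !inE mem_rot.
split.
- by rewrite /p Hp count_ins.
- rewrite /p Hp /=; apply: (bound0 Hl); rewrite -Hm; exact: mem_last.
- rewrite /p Hp /=; apply: (bound0 Hl); rewrite -Hm; exact: head_mem0.
- by rewrite /p mem_nth // size_cp.
Qed.

Lemma Co_ins m l k : l \in U m -> k < m ->
  Co (ins l m.+1 k) = Co l && odd (bk l k).
Proof.
move=> Hl Hk; have [E H1 H2 Hin] := ins_facts Qbad Hl Hk.
rewrite /bk; move: E H1 H2 Hin.
case: (nth (0,0) (cp l) k) => a b /= E H1 H2 Hin.
have Qae : Qbad (a, m.+1) = false by rewrite /Qbad /isd /= ltnNge ltnW.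
have Qeb : Qbad (m.+1, b) = ~~ odd b by rewrite /Qbad /isd /= H2.
rewrite Qae Qeb addn0 in E.
have Hc : Qbad (a, b) -> 0 < count Qbad (cp l).
  by move=> Hq; rewrite -has_count; apply/hasP; exists (a, b).
rewrite /Co; case Hob: (odd b) E => E.
  have Hq : Qbad (a, b) = false by rewrite /Qbad Hob andbF.
  rewrite Hq /= !addn0 in E.
  by rewrite andbT E.
rewrite andbF; apply/eqP => E0; rewrite E0 /= in E.
case Hq: (Qbad (a,b)) E => E.
  by have := Hc Hq; lia.
lia.
Qed.

Lemma ins_U m l k : 0 < m -> l \in U m -> k < m -> ins l m.+1 k \in U m.+1.
Proof.
move=> Hm Hl Hk; move: (Hl); rewrite !memU => /andP [Hp Hh].
apply/andP; split.
  rewrite /ins -cat1s perm_catCA cat1s cat_take_drop.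
  by rewrite -addn1 iotaD perm_sym perm_catC add1n addn1 /= perm_cons perm_sym.
move: Hh; have := U_size Hl.
by case: l {Hl Hp} => [|a l] //= _.
Qed.

Lemma ins_take_drop l e k : k < size l ->
  take k.+1 (ins l e k) = take k.+1 l /\ drop k.+2 (ins l e k) = drop k.+1 l.
Proof.
move=> Hk; have Hs : size (take k.+1 l) = k.+1 by rewrite size_takel.
rewrite /ins take_cat drop_cat Hs ltnn subnn take0 cats0 ltnNge leqnSn /=.
by rewrite subSnn /= drop0.
Qed.

Lemma ins_index m l k : l \in U m -> k < m -> index m.+1 (ins l m.+1 k) = k.+1.
Proof.
move=> Hl Hk; have Hs : size (take k.+1 l) = k.+1 by rewrite size_takel // (U_size Hl).
have Hn : m.+1 \notin take k.+1 l.
  apply/negP => /mem_take /(U_bound Hl); lia.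
by rewrite /ins index_cat (negbTE Hn) Hs /= eqxx addn0.
Qed.

Lemma ins_inj m l1 l2 k1 k2 : l1 \in U m -> l2 \in U m -> k1 < m -> k2 < m ->
  ins l1 m.+1 k1 = ins l2 m.+1 k2 -> l1 = l2 /\ k1 = k2.
Proof.
move=> H1 H2 Hk1 Hk2 E.
have Ek : k1 = k2.
  by have := ins_index H1 Hk1; rewrite E (ins_index H2 Hk2) => [[]].
subst k2; split => //.
have Hs1 : k1 < size l1 by rewrite (U_size H1).
have Hs2 : k1 < size l2 by rewrite (U_size H2).
have [T1 D1] := ins_take_drop m.+1 Hs1.
have [T2 D2] := ins_take_drop m.+1 Hs2.
by rewrite -(cat_take_drop k1.+1 l1) -(cat_take_drop k1.+1 l2) -T1 -T2 -D1 -D2 E.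
Qed.

Lemma mem_Ins m l' : 0 < m ->
  (l' \in [seq l <- U m.+1 | Co l]) = (l' \in Ins m).
Proof.
move=> Hm; apply/idP/idP.
- rewrite mem_filter => /andP [HC HU].
  move: (HU); rewrite memU => /andP [Hp Hh].
  have He : m.+1 \in l' by rewrite (perm_mem Hp) mem_iota; lia.
  set i := index m.+1 l'.
  have Hi : i < m.+1 by rewrite -(U_size HU) index_mem.
  have Hi0 : i != 0.
    rewrite /i; case: l' {Hp HC HU He Hi i} Hh => [|a l0] //= /eqP ->.
    by case: m Hm.
  pose k := i.-1.
  have Eik : i = k.+1 by rewrite /k; case: (i) Hi0.
  pose l := take i l' ++ drop i.+1 l'.
  have Hsz : size (take i l') = i by rewrite size_takel // (U_size HU); apply: ltnW.
  have El' : l' = ins l m.+1 k.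
    rewrite /ins /l -Eik take_cat drop_cat Hsz ltnn subnn take0 cats0.
    have := nth_index 0 He; rewrite -/i => Hn.
    have Hil : i < size l' by rewrite (U_size HU).
    by rewrite drop0 -{1}(cat_take_drop i l') (drop_nth 0 Hil) Hn.
  have Hl : l \in U m.
    rewrite memU; apply/andP; split.
      have H1 : perm_eq l' (m.+1 :: l) by rewrite /l -remE; exact: perm_to_rem.
      have X : perm_eq (iota 1 m.+1) (m.+1 :: iota 1 m).
        by rewrite -(addn1 m) iotaD perm_catC add1n addn1.
      rewrite perm_sym in H1.
      have H2 := perm_trans H1 (perm_trans Hp X).
      by rewrite perm_cons in H2.
    move: Hh; rewrite /l Eik.
    by case: (l') => [|a l0] //=.
  have Hk : k < m by lia.
  have := Co_ins Hl Hk; rewrite -El' HC => /esym /andP [Hco Hb].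
  apply/mapP; exists (l, k) => //.
  rewrite mem_filter /= Hb /=.
  apply: allpairs_f; last by rewrite mem_iota; lia.
  by rewrite mem_filter Hco Hl.
- move/mapP => [[l k]]; rewrite mem_filter /= => /andP [Hb].
  move/allpairsP => [[l1 k1] [/= H1 H2 [El Ek]]] ->; subst l k.
  move: H1; rewrite mem_filter => /andP [Hco Hl].
  have Hk : k1 < m by move: H2; rewrite mem_iota; lia.
  by rewrite mem_filter Co_ins // Hco Hb ins_U.
Qed.

Lemma Ins_perm m : 0 < m -> perm_eq [seq l <- U m.+1 | Co l] (Ins m).
Proof.
move=> Hm; apply: uniq_perm.
- by rewrite filter_uniq // filter_uniq // permutations_uniq.
- rewrite /Ins map_inj_in_uniq.
    rewrite filter_uniq // allpairs_uniq ?iota_uniq //.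
      by rewrite filter_uniq // filter_uniq // permutations_uniq.
    by move=> [a b] [c d] _ _ /= [-> ->].
  move=> [l1 k1] [l2 k2]; rewrite !mem_filter /= => /andP [_ /allpairsP [[a b] [/= Ha Hb [-> ->]]]].
  move=> /andP [_ /allpairsP [[c d] [/= Hc Hd [-> ->]]]].
  move: Hb Hd; rewrite !mem_iota => Hb Hd E.
  have {}Ha : a \in U m by move: Ha; rewrite mem_filter => /andP [].
  have {}Hc : c \in U m by move: Hc; rewrite mem_filter => /andP [].
  have Hb' : b < m by lia.
  have Hd' : d < m by lia.
  by have [-> ->] := ins_inj Ha Hc Hb' Hd' E.
- by move=> z; apply: mem_Ins.
Qed.

Definition Qoo (p : nat * nat) := isd p && odd p.1 && odd p.2.
Definition Qeo (p : nat * nat) := isd p && ~~ odd p.1 && odd p.2.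
Definition Qn (p : nat * nat) := ~~ isd p && odd p.2.
Arguments Qoo : simpl never.
Arguments Qeo : simpl never.
Arguments Qn : simpl never.
Definition oo l := count Qoo (cp l).
Definition eo l := count Qeo (cp l).

Lemma count_odd2 (s : seq (nat * nat)) :
  count (fun p => odd p.2) s = count Qoo s + count Qeo s + count Qn s.
Proof.
elim: s => //= [[a b]] s ->; rewrite /Qoo /Qeo /Qn /=.
by case: (isd _); case: (odd a); case: (odd b) => /=; lia.
Qed.

Lemma count_odd_cp m l : l \in U m ->
  count (fun p => odd p.2) (cp l) = count odd (iota 1 m).
Proof.
move=> Hl; move: (Hl); rewrite memU => /andP [Hp _].
have -> : count (fun p => odd p.2) (cp l) = count odd (unzip2 (cp l)) by rewrite count_map.
rewrite /cp unzip2_zip ?size_rot //.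
rewrite (seq.permP (_ : perm_eq (rot 1 l) l)) ?perm_rot //.
exact: (seq.permP Hp).
Qed.

Section Weights.
Variable R : fieldType.
Variables x y : R.
Hypothesis x0 : (x != 0)%R.
Hypothesis y0 : (y != 0)%R.
Local Open Scope ring_scope.

Definition wt l := x ^+ oo l * y ^+ eo l.
Definition cc e := x ^+ (odd e) * y ^+ (~~ odd e).
Definition phi e p := cc e / (x ^+ (Qoo p) * y ^+ (Qeo p)).

Lemma sum_phi e (s : seq (nat * nat)) :
  \sum_(p <- s | odd p.2) phi e p =
  (count Qoo s)%:R * (cc e / x) + (count Qeo s)%:R * (cc e / y) + (count Qn s)%:R * cc e.
Proof.
elim: s => [|[a b] s IH]; first by rewrite big_nil !mul0r !addr0.
rewrite big_cons IH /= /phi /Qoo /Qeo /Qn /=.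
case: (isd _); case: (odd a); case: (odd b); rewrite /= ?add0n ?natrD ?expr0 ?expr1 ?mulr1 ?mul1r ?invr1;
  field; by rewrite ?x0 ?y0.
Qed.

Lemma wt_ins m l k : l \in U m -> (k < m)%N -> odd (bk l k) ->
  wt (ins l m.+1 k) = wt l * phi m.+1 (nth (0,0) (cp l) k).
Proof.
move=> Hl Hk.
have [E1 H1 H2 _] := ins_facts Qoo Hl Hk.
have [E2 _ _ _] := ins_facts Qeo Hl Hk.
rewrite /bk; move: E1 E2 H1 H2.
case: (nth (0,0) (cp l) k) => a b /= E1 E2 H1 H2 Hb.
have Hae : isd (a, m.+1) = false by rewrite /isd /= ltnNge ltnW.
have Heb : isd (m.+1, b) by rewrite /isd /=.
have Q1 : Qoo (a, m.+1) = false by rewrite /Qoo Hae.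
have Q2 : Qeo (a, m.+1) = false by rewrite /Qeo Hae.
have Q3 : Qoo (m.+1, b) = odd m.+1 by rewrite /Qoo Heb Hb andbT.
have Q4 : Qeo (m.+1, b) = ~~ odd m.+1 by rewrite /Qeo Heb Hb andbT.
rewrite Q1 Q3 addn0 in E1.
rewrite Q2 Q4 addn0 in E2.
rewrite /wt /phi /cc.
have Ex : x ^+ oo (ins l m.+1 k) = x ^+ oo l * x ^+ odd m.+1 / x ^+ Qoo (a, b).
  rewrite -exprD -E1 exprD mulfK //; exact: expf_neq0.
have Ey : y ^+ eo (ins l m.+1 k) = y ^+ eo l * y ^+ (~~ odd m.+1) / y ^+ Qeo (a, b).
  rewrite -exprD -E2 exprD mulfK //; exact: expf_neq0.
rewrite Ex Ey; field.
by rewrite !expf_neq0.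
Qed.

Lemma sum_step m : (0 < m)%N ->
  \sum_(l <- U m.+1 | Co l) wt l =
  \sum_(l <- U m | Co l) wt l * \sum_(p <- cp l | odd p.2) phi m.+1 p.
Proof.
move=> Hm.
rewrite -big_filter (perm_big _ (Ins_perm Hm)) /Ins big_map big_filter big_mkcond big_allpairs /=.
rewrite -[RHS]big_filter; apply: eq_big_seq => l Hl.
have HU : l \in U m by move: Hl; rewrite mem_filter => /andP [].
have Ecp : cp l = [seq nth (0,0) (cp l) k | k <- iota 0 m].
  by rewrite -{1}(mkseq_nth (0,0) (cp l)) size_cp (U_size HU).
rewrite [in X in _ = _ * X]Ecp big_map mulr_sumr [RHS]big_mkcond /=.
apply: eq_big_seq => k; rewrite mem_iota add0n => /andP [_ Hk].
rewrite /bk; case: ifP => Hb //.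
by rewrite wt_ins.
Qed.

End Weights.

Definition fs m (s : 'S_m) : seq nat := [seq (val (s i)).+1 | i <- enum 'I_m].

Lemma size_fs m (s : 'S_m) : size (fs s) = m.
Proof. by rewrite size_map size_enum_ord. Qed.

Lemma nth_rot1 (T : Type) (x0 : T) s i : i < size s ->
  nth x0 (rot 1 s) i = nth x0 s (i.+1 %% size s).
Proof.
case: s => [|a s] //= Hi; rewrite rot1_cons nth_rcons.
case: ltnP => H.
  by rewrite modn_small.
have -> : i = size s by lia.
by rewrite eqxx modnn.
Qed.

Lemma cyc_cp m (s : 'S_m) : [seq cyc_pair s i | i <- enum 'I_m] = cp (fs s).
Proof.
apply: (eq_from_nth (x0 := (0,0))); first by rewrite size_cp size_fs size_map size_enum_ord.
move=> i; rewrite size_map size_enum_ord => Hi.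
have Hm : 0 < m by case: (m) Hi.
pose z := Ordinal Hi.
rewrite (nth_map z) ?size_enum_ord // /cp nth_zip ?size_rot // nth_rot1 ?size_fs //.
rewrite /fs !(nth_map z) -?enumT ?size_enum_ord ?ltn_pmod //.
rewrite /cyc_pair; congr (_, (val (s _)).+1).
by apply: val_inj; rewrite /= -?enumT !nth_enum_ord ?ltn_pmod.
Qed.

Lemma drops_cp m (s : 'S_m) : drops s = filter isd (cp (fs s)).
Proof. by rewrite /drops -cyc_cp filter_map. Qed.

Lemma drop_oo_eq m (s : 'S_m) : drop_oo s = oo (fs s).
Proof.
rewrite /drop_oo drops_cp count_filter /oo; apply: eq_count => p.
by rewrite /Qoo /= andbC andbA.
Qed.

Lemma drop_eo_eq m (s : 'S_m) : drop_eo s = eo (fs s).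
Proof.
rewrite /drop_eo drops_cp count_filter /eo; apply: eq_count => p.
by rewrite /Qeo /= andbC andbA.
Qed.

Lemma in_Co_eq m (s : 'S_m) : in_Co s = Co (fs s).
Proof.
rewrite /in_Co drops_cp /Co; elim: (cp _) => //= p t IH.
by rewrite /Qbad; case: (isd p) => /=; rewrite IH //; case: (odd p.2).
Qed.

Lemma map_succ_enum m : [seq (val i).+1 | i <- enum 'I_m] = iota 1 m.
Proof.
by rewrite -[1]/(1 + 0) iotaDl -val_enum_ord -map_comp.
Qed.

Lemma fs_perm m (s : 'S_m) : perm_eq (fs s) (iota 1 m).
Proof.
rewrite -map_succ_enum /fs.
have -> : [seq (val (s i)).+1 | i <- enum 'I_m] = [seq (val i).+1 | i <- [seq s i | i <- enum 'I_m]].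
  by elim: (enum 'I_m) => //= i t ->.
apply: perm_map; apply: uniq_perm.
- by rewrite map_inj_uniq ?enum_uniq //; exact: perm_inj.
- exact: enum_uniq.
- move=> i; rewrite mem_enum; apply/mapP; exists (s^-1 i)%g; first by rewrite mem_enum.
  by rewrite permKV.
Qed.

Lemma fs_head m (s : 'S_m) : 0 < m -> cycle_rep s -> head 0 (fs s) = 1.
Proof.
case: m s => [|m] s // _ /forallP /(_ ord0) /= /eqP H.
rewrite -nth0 /fs (nth_map ord0) ?size_enum_ord //.
have -> : nth ord0 (enum 'I_m.+1) 0 = ord0 by apply: val_inj; rewrite /= nth_enum_ord.
have H' : val (s ord0) = 0 := H.
by rewrite H'.
Qed.

Lemma fs_inj m : injective (@fs m).
Proof.
move=> s1 s2 E; apply/permP => i; apply: val_inj.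
move: E; rewrite /fs => /eq_in_map /(_ i).
by rewrite mem_enum => /(_ isT) [].
Qed.

Lemma fs_surj m l : l \in U m -> exists2 s : 'S_m, cycle_rep s & fs s = l.
Proof.
case: m l => [|m] l HU.
  by move: HU; rewrite memU => /andP [/perm_size]; case: l.
have Hs := U_size HU.
have Hb z : z \in l -> 0 < z <= m.+1 by exact: U_bound HU.
have Hu : uniq l by move: HU; rewrite memU => /andP [/perm_uniq -> _]; exact: iota_uniq.
pose g (i : 'I_m.+1) : 'I_m.+1 := inord (nth 0 l i).-1.
have Hn (i : 'I_m.+1) : 0 < nth 0 l i <= m.+1 by apply: Hb; rewrite mem_nth // Hs.
have Hg i : nat_of_ord (g i) = (nth 0 l i).-1 by rewrite /g inordK //; have := Hn i; lia.
have ginj : injective g.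
  move=> i j /(congr1 (@nat_of_ord _)); rewrite !Hg => E.
  apply: val_inj; apply/eqP; rewrite -(nth_uniq 0 _ _ Hu) ?Hs ?ltn_ord //.
  apply/eqP; change (nth 0 l (nat_of_ord i) = nth 0 l (nat_of_ord j)).
  have := Hn i; have := Hn j; lia.
exists (perm ginj).
  apply/forallP => i; apply/implyP => /eqP Hi.
  have Hi' : nat_of_ord i = 0 := Hi.
  rewrite permE; change (nat_of_ord (g i) == 0); rewrite Hg Hi' nth0.
  by move: HU; rewrite memU => /andP [_ /eqP ->].
apply: (eq_from_nth (x0 := 0)); first by rewrite size_fs Hs.
move=> i; rewrite size_fs => Hi.
rewrite /fs (nth_map ord0) ?size_enum_ord // permE.
change ((nat_of_ord (g (nth ord0 (enum 'I_m.+1) i))).+1 = nth 0 l i).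
rewrite Hg -?enumT nth_enum_ord //.
by have := Hn (Ordinal Hi); rewrite /=; lia.
Qed.

Lemma Csum_U (R : comNzRingType) m (F : nat -> nat -> R) : 0 < m ->
  Csum m F = (\sum_(l <- U m | Co l) F (oo l) (eo l))%R.
Proof.
move=> Hm; rewrite /Csum.
have P : perm_eq [seq fs s | s in @cycle_rep m] (U m).
  apply: uniq_perm.
  - rewrite map_inj_uniq ?enum_uniq //; exact: fs_inj.
  - by rewrite filter_uniq // permutations_uniq.
  - move=> l; apply/idP/idP.
    + move/imageP => [s Hs ->]; rewrite memU fs_perm fs_head //.
    + by move/fs_surj => [s Hs <-]; apply: image_f.
rewrite -(perm_big _ P) big_image_cond /=.
apply: eq_big => s; first by rewrite in_Co_eq.
by rewrite drop_oo_eq drop_eo_eq.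
Qed.

Lemma count_odd_even n : count odd (iota 1 (2 * n)) = n.
Proof.
elim: n => // n IH.
rewrite (_ : 2 * n.+1 = 2 * n + 2); last by lia.
rewrite iotaD count_cat IH /= ?add0n oddM /=; lia.
Qed.


Lemma count_odd_odd n : 0 < n -> count odd (iota 1 (2 * n - 1)) = n.
Proof.
case: n => // n _.
rewrite (_ : 2 * n.+1 - 1 = 2 * n + 1); last by lia.
rewrite iotaD count_cat count_odd_even /= ?add0n oddM /=; lia.
Qed.

Section Main.
Variable R : fieldType.
Variables x y : R.
Hypothesis x0 : (x != 0)%R.
Hypothesis y0 : (y != 0)%R.
Local Open Scope ring_scope.

Lemma step m : (0 < m)%N ->
  Csum m.+1 (fun a b => x ^+ a * y ^+ b) =
  \sum_(l <- U m | Co l) x ^+ oo l * y ^+ eo l *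
     ((oo l)%:R * (cc x y m.+1 / x) + (eo l)%:R * (cc x y m.+1 / y)
      + (count odd (iota 1 m) - oo l - eo l)%N%:R * cc x y m.+1)
  /\ (forall l, l \in U m -> (oo l + eo l <= count odd (iota 1 m))%N).
Proof.
move=> Hm; split; last first.
  move=> l Hl; rewrite -(count_odd_cp Hl) count_odd2 /oo /eo; lia.
rewrite Csum_U // -/(wt x y _).
have -> : \sum_(l <- U m.+1 | Co l) x ^+ oo l * y ^+ eo l = \sum_(l <- U m.+1 | Co l) wt x y l by [].
rewrite sum_step //.
rewrite -big_filter -[RHS]big_filter; apply: eq_big_seq => l Hl.
have HU : l \in U m by move: Hl; rewrite mem_filter => /andP [].
rewrite sum_phi // -(count_odd_cp HU) count_odd2.
have -> : (count Qoo (cp l) + count Qeo (cp l) + count Qn (cp l) - oo l - eo l = count Qn (cp l))%N.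
  by rewrite /oo /eo; lia.
by [].
Qed.


End Main.

Local Open Scope ring_scope.

Lemma int_cast (R : comNzRingType) (n a b : nat) : (a + b <= n)%N ->
  ((n%:Z - a%:Z - b%:Z)%:~R : R) = n%:R - a%:R - b%:R.
Proof.
move=> H.
have -> : (n%:Z - a%:Z - b%:Z) = (n - a - b)%N%:Z by lia.
have -> : (((n - a - b)%N%:Z)%:~R : R) = (n - a - b)%N%:R by [].
by rewrite !natrB //; lia.
Qed.

Lemma nat_cast (R : comNzRingType) (n a b : nat) : (a + b <= n)%N ->
  ((n - a - b)%N%:R : R) = n%:R - a%:R - b%:R.
Proof. by move=> H; rewrite !natrB //; lia. Qed.

Unset Implicit Arguments.

Theorem lemma2p1 (R : fieldType) (x y : R) (n : nat) :
  x != 0 -> y != 0 -> (1 <= n)%N ->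
  Csum (2 * n) (fun a b => x ^+ a * y ^+ b) =
    Csum (2 * n - 1) (fun a b => x ^+ a * y ^+ b *
      (a%:R * x^-1 * y + b%:R + ((n%:Z - a%:Z - b%:Z)%:~R) * y))
  /\
  Csum (2 * n + 1) (fun a b => x ^+ a * y ^+ b) =
    Csum (2 * n) (fun a b => x ^+ a * y ^+ b *
      (a%:R + b%:R * x * y^-1 + ((n%:Z - a%:Z - b%:Z)%:~R) * x)).
Proof.
move=> x0 y0 Hn; split.
- have Hm : (0 < 2 * n - 1)%N by lia.
  have E : (2 * n = (2 * n - 1).+1)%N by lia.
  have [S1 S2] := step x0 y0 Hm.
  rewrite [in LHS]E S1 (Csum_U _ Hm) count_odd_odd //.
  rewrite -big_filter -[RHS]big_filter; apply: eq_big_seq => l Hl.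
  have HU : l \in U (2 * n - 1) by move: Hl; rewrite mem_filter => /andP [].
  have Hle := S2 l HU; rewrite count_odd_odd // in Hle.
  have Hodd : odd (2 * n - 1).+1 = false by rewrite -E oddM.
  rewrite /cc Hodd /= int_cast // nat_cast // expr0 expr1.
  field; by rewrite x0 y0.
- have Hm : (0 < 2 * n)%N by lia.
  have E : (2 * n + 1 = (2 * n).+1)%N by lia.
  have [S1 S2] := step x0 y0 Hm.
  rewrite [in LHS]E S1 (Csum_U _ Hm) count_odd_even.
  rewrite -big_filter -[RHS]big_filter; apply: eq_big_seq => l Hl.
  have HU : l \in U (2 * n) by move: Hl; rewrite mem_filter => /andP [].
  have Hle := S2 l HU; rewrite count_odd_even in Hle.
  have Hodd : odd (2 * n).+1 = true by rewrite /= oddM.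
  rewrite /cc Hodd /= int_cast // nat_cast // expr0 expr1.
  field; by rewrite x0 y0.
Qed.
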